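(* Let $H^0(\mathcal A_\theta^{alg},{}_{\omega}\mathcal A_\theta^{alg\ast})$ be the space of formal series $\varphi=\sum_{(n,m)\in\mathbb Z^2}\varphi_{n,m}U_1^nU_2^m$ satisfying $(\omega\cdot a)\varphi=\varphi a$ for all $a\in\mathcal A_\theta^{alg}$. Then every such $\varphi$ is determined by the three coefficients $\varphi_{0,0},\varphi_{0,1},\varphi_{0,-1}$ (which generate the space), and its coefficients satisfy: if $m-n\equiv 0\pmod 3$ then $\varphi_{n,m}=\lambda^{\frac{m^2+n^2+4mn}{6}}\varphi_{0,0}$; if $m-n\equiv\pm1\pmod 3$ then $\varphi_{n,m}=\lambda^{\frac{m^2+n^2+4mn-1}{6}}\varphi_{0,\pm1}$.
   Context: Let $\theta\in\mathbb R\setminus\mathbb Q$, $\lambda=e^{2\pi i\theta}$, and $\lambda^s:=e^{2\pi i\theta s}$ for $s\in\mathbb R$. $\mathcal A_\theta^{alg}$ is the complex algebra of finite sums $\sum a_{n,m}U_1^nU_2^m$ with $U_1,U_2$ invertible and $U_2U_1=\lambda U_1U_2$. $\mathcal A_\theta^{alg\ast}$ denotes the space of all formal series $\sum_{(n,m)\in\mathbb Z^2}\varphi_{n,m}U_1^nU_2^m$ (arbitrary complex coefficients); it is an $\mathcal A_\theta^{alg}$-bimodule via left and right multiplication by elements of $\mathcal A_\theta^{alg}$ using the relation $U_2U_1=\lambda U_1U_2$. $\omega$ denotes the automorphism of $\mathcal A_\theta^{alg}$ with $\omega\cdot U_1=U_2^{-1}$, $\omega\cdot U_2=\lambda^{-1/2}U_1U_2^{-1}$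 (the action of $\begin{pmatrix}0&1\\-1&-1\end{pmatrix}\in SL(2,\mathbb Z)$). ${}_\omega\mathcal A_\theta^{alg\ast}$ is $\mathcal A_\theta^{alg\ast}$ with bimodule structure $a\cdot\varphi=(\omega\cdot a)\varphi$, $\varphi\cdot a=\varphi a$. *)

(* Defs.v *)
From Stdlib Require Import Reals ZArith List.
From Coquelicot Require Export Coquelicot.
Open Scope R_scope.

(* lambda^s := e^{2 pi i theta s} for real s *)
Definition lam (theta s : R) : Coquelicot.Complex.C := (cos (2 * PI * theta * s), sin (2 * PI * theta * s)).

Definition irrational (theta : R) : Prop :=
  forall (p q : Z), q <> 0%Z -> theta * IZR q <> IZR p.

(* A monomial c * U1^n U2^m is represented as (c, (n, m)). *)
Definition mono := (Coquelicot.Complex.C * (Z * Z))%type.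

(* Product of monomials using U2 U1 = lambda U1 U2:
   U1^n U2^m U1^n' U2^m' = lambda^{m n'} U1^{n+n'} U2^{m+m'} *)
Definition mmul (theta : R) (x y : mono) : mono :=
  let '(c, (n, m)) := x in let '(c', (n', m')) := y in
  (Cmult (Cmult c c') (lam theta (IZR (m * n'))), ((n + n')%Z, (m + m')%Z)).

Definition mone : mono := (RtoC 1, (0%Z, 0%Z)).

(* inverse of an (invertible, c <> 0) monomial:
   (c U1^n U2^m)^{-1} = c^{-1} lambda^{nm} U1^{-n} U2^{-m} *)
Definition minv (theta : R) (x : mono) : mono :=
  let '(c, (n, m)) := x in
  (Cmult (Cinv c) (lam theta (IZR (n * m))), ((- n)%Z, (- m)%Z)).

Fixpoint mpow_nat (theta : R) (x : mono) (k : nat) : mono :=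
  match k with
  | O => mone
  | S k' => mmul theta x (mpow_nat theta x k')
  end.

Definition mpow (theta : R) (x : mono) (k : Z) : mono :=
  if (0 <=? k)%Z then mpow_nat theta x (Z.to_nat k)
  else mpow_nat theta (minv theta x) (Z.to_nat (- k)).

(* omega on generators: omega U1 = U2^{-1}, omega U2 = lambda^{-1/2} U1 U2^{-1} *)
Definition omega_U1 : mono := (RtoC 1, (0%Z, (-1)%Z)).
Definition omega_U2 (theta : R) : mono := (lam theta (- / 2), (1%Z, (-1)%Z)).

Definition omega_mono (theta : R) (x : mono) : mono :=
  let '(c, (n, m)) := x in
  let '(d, nm) := mmul theta (mpow theta omega_U1 n) (mpow theta (omega_U2 theta) m) in
  (Cmult c d, nm).

(* An element of A_theta^alg is a finite sum of monomials. *)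
Definition Aalg := list mono.

Definition omega (theta : R) (a : Aalg) : Aalg := map (omega_mono theta) a.

(* Formal series sum phi_{n,m} U1^n U2^m, arbitrary coefficients. *)
Definition series := Z -> Z -> Coquelicot.Complex.C.

Definition series_zero : series := fun _ _ => RtoC 0.
Definition series_add (f g : series) : series := fun n m => Cplus (f n m) (g n m).

Definition lmul_mono (theta : R) (x : mono) (phi : series) : series :=
  let '(c, (a, b)) := x in
  fun n m => Cmult (Cmult c (lam theta (IZR (b * (n - a)))))
                   (phi (n - a)%Z (m - b)%Z).

Definition rmul_mono (theta : R) (phi : series) (x : mono) : series :=
  let '(c, (a, b)) := x in
  fun n m => Cmult (Cmult c (lam theta (IZR ((m - b) * a))))
                   (phi (n - a)%Z (m - b)%Z).

Definition lmul (theta : R) (a : Aalg) (phi : series) : series :=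
  fold_right (fun x acc => series_add (lmul_mono theta x phi) acc) series_zero a.

Definition rmul (theta : R) (phi : series) (a : Aalg) : series :=
  fold_right (fun x acc => series_add (rmul_mono theta phi x) acc) series_zero a.

Definition H0 (theta : R) (phi : series) : Prop :=
  forall a : Aalg, lmul theta (omega theta a) phi = rmul theta phi a.

(* Main.v *)
Require Import Defs.
From Stdlib Require Import Reals ZArith Lia Lra FunctionalExtensionality List.
Open Scope R_scope.

Lemma lam_add t s u : Cmult (lam t s) (lam t u) = lam t (s + u).
Proof.
  unfold lam, Cmult; simpl.
  replace (2 * PI * t * (s + u)) with (2 * PI * t * s + 2 * PI * t * u) by ring.
  rewrite cos_plus, sin_plus. f_equal; ring.
Qed.

Lemma lam_0 t s : s = 0 -> lam t s = RtoC 1.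
Proof. intros ->. unfold lam, RtoC. rewrite Rmult_0_r, cos_0, sin_0. reflexivity. Qed.

Lemma lam_eq t s u : s = u -> lam t s = lam t u.
Proof. intros ->; reflexivity. Qed.

Lemma lam_inv t s : Cinv (lam t s) = lam t (- s).
Proof.
  unfold lam, Cinv; simpl.
  replace (2 * PI * t * - s) with (- (2 * PI * t * s)) by ring.
  rewrite cos_neg, sin_neg.
  pose proof (sin2_cos2 (2 * PI * t * s)) as H. unfold Rsqr in H.
  replace (cos (2 * PI * t * s) * (cos (2 * PI * t * s) * 1) +
    sin (2 * PI * t * s) * (sin (2 * PI * t * s) * 1)) with 1 by lra.
  f_equal; field.
Qed.

Lemma U1_pow_nat t k : mpow_nat t omega_U1 k = (RtoC 1, (0%Z, (- Z.of_nat k)%Z)).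
Proof.
  induction k as [|k IH]; cbn [mpow_nat].
  - reflexivity.
  - rewrite IH. unfold mmul, omega_U1. f_equal.
    + rewrite (lam_0 t); [ring|]. rewrite Z.mul_0_r. reflexivity.
    + f_equal; lia.
Qed.

Lemma U1_inv_pow_nat t k : mpow_nat t (minv t omega_U1) k = (RtoC 1, (0%Z, Z.of_nat k)).
Proof.
  assert (E : minv t omega_U1 = (RtoC 1, (0%Z, 1%Z))).
  { unfold minv, omega_U1. f_equal.
    rewrite (lam_0 t); [|reflexivity]. unfold Cinv, Cmult, RtoC; simpl. f_equal; field. }
  rewrite E. induction k as [|k IH]; cbn [mpow_nat].
  - reflexivity.
  - rewrite IH. unfold mmul. f_equal.
    + rewrite (lam_0 t); [ring|]. rewrite Z.mul_0_r. reflexivity.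
    + f_equal; lia.
Qed.

Lemma U1_pow t a : mpow t omega_U1 a = (RtoC 1, (0%Z, (- a)%Z)).
Proof.
  unfold mpow. destruct (Z.leb_spec 0 a).
  - rewrite U1_pow_nat, Z2Nat.id by lia. reflexivity.
  - rewrite U1_inv_pow_nat, Z2Nat.id by lia. reflexivity.
Qed.

Lemma U2_pow_nat t k : mpow_nat t (omega_U2 t) k =
  (lam t (- (IZR (Z.of_nat k))^2 / 2), (Z.of_nat k, (- Z.of_nat k)%Z)).
Proof.
  induction k as [|k IH]; cbn [mpow_nat].
  - simpl. rewrite (lam_0 t); [reflexivity|]. simpl; field.
  - rewrite IH. unfold mmul, omega_U2. f_equal.
    + rewrite !lam_add. apply lam_eq. rewrite Nat2Z.inj_succ, succ_IZR, mult_IZR; rewrite ?opp_IZR.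
      simpl. field.
    + f_equal; lia.
Qed.

Lemma U2_inv_pow_nat t k : mpow_nat t (minv t (omega_U2 t)) k =
  (lam t (- (IZR (Z.of_nat k))^2 / 2), ((- Z.of_nat k)%Z, Z.of_nat k)).
Proof.
  assert (E : minv t (omega_U2 t) = (lam t (- / 2), ((-1)%Z, 1%Z))).
  { unfold minv, omega_U2. f_equal.
    rewrite lam_inv, lam_add. apply lam_eq. simpl. field. }
  rewrite E. induction k as [|k IH]; cbn [mpow_nat].
  - simpl. rewrite (lam_0 t); [reflexivity|]. simpl; field.
  - rewrite IH. unfold mmul. f_equal.
    + rewrite !lam_add. apply lam_eq. rewrite Nat2Z.inj_succ, succ_IZR, mult_IZR; rewrite ?opp_IZR.
      simpl. field.
    + f_equal; lia.
Qed.

Lemma U2_pow t b : mpow t (omega_U2 t) b = (lam t (- (IZR b)^2 / 2), (b, (- b)%Z)).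
Proof.
  unfold mpow. destruct (Z.leb_spec 0 b).
  - rewrite U2_pow_nat, Z2Nat.id by lia. reflexivity.
  - rewrite U2_inv_pow_nat, Z2Nat.id by lia. f_equal.
    + apply lam_eq. rewrite opp_IZR. field.
    + f_equal; lia.
Qed.

Lemma omega_mono_eq t c a b : omega_mono t (c, (a, b)) =
  (Cmult c (lam t (- (IZR b)^2 / 2 - IZR a * IZR b)), (b, (- a - b)%Z)).
Proof.
  unfold omega_mono. rewrite U1_pow, U2_pow. unfold mmul. f_equal.
  - replace (lam t (- IZR b ^ 2 / 2 - IZR a * IZR b)) with
      (lam t (- IZR b ^ 2 / 2 + IZR (- a * b))). rewrite <- lam_add. ring.
    apply lam_eq. rewrite mult_IZR, opp_IZR. ring.
Qed.

Definition rr (n m : Z) : R := if Z.eqb (Z.modulo (m - n) 3) 0 then 0 else 1.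
Definition fexp (n m : Z) : R := (IZR (m*m) + IZR (n*n) + 4 * IZR (m*n) - rr n m) / 6.

Lemma cls_shift a b n m : Z.modulo ((m - (- a - b)) - (n - b)) 3 = Z.modulo ((m - b) - (n - a)) 3.
Proof.
  replace ((m - (- a - b)) - (n - b))%Z with (((m - b) - (n - a)) + b * 3)%Z by ring.
  apply Z_mod_plus_full.
Qed.

Lemma rr_shift a b n m : rr (n - b) (m - (- a - b)) = rr (n - a) (m - b).
Proof. unfold rr. rewrite cls_shift. reflexivity. Qed.

Lemma key_id a b n m :
  (- IZR b ^ 2 / 2 - IZR a * IZR b) + IZR ((- a - b) * (n - b)) + fexp (n - b) (m - (- a - b))
  = IZR ((m - b) * a) + fexp (n - a) (m - b).
Proof.
  unfold fexp. rewrite rr_shift. set (r := rr (n - a) (m - b)).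
  repeat rewrite ?mult_IZR, ?minus_IZR, ?plus_IZR, ?opp_IZR. field.
Qed.

Lemma mono_l t phi c a b : lmul_mono t (omega_mono t (c, (a, b))) phi =
  fun n m => Cmult (Cmult (Cmult c (lam t (- IZR b ^ 2 / 2 - IZR a * IZR b)))
    (lam t (IZR ((- a - b) * (n - b))))) (phi (n - b)%Z (m - (- a - b))%Z).
Proof. rewrite omega_mono_eq. reflexivity. Qed.

Lemma H0_mono t phi : H0 t phi -> forall x, lmul_mono t (omega_mono t x) phi = rmul_mono t phi x.
Proof.
  intros H x. specialize (H (x :: nil)).
  unfold lmul, rmul, omega in H. cbn [map fold_right] in H.
  apply functional_extensionality; intro n. apply functional_extensionality; intro m.
  pose proof (f_equal (fun F => F n m) H) as K. unfold series_add, series_zero in K.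
  cbv beta in K.
  replace (lmul_mono t (omega_mono t x) phi n m) with
    (Cplus (lmul_mono t (omega_mono t x) phi n m) (RtoC 0)) by ring.
  rewrite K. ring.
Qed.

Lemma mono_H0 t phi : (forall x, lmul_mono t (omega_mono t x) phi = rmul_mono t phi x) -> H0 t phi.
Proof.
  intros H a. unfold lmul, rmul, omega. induction a as [|x a IH].
  - reflexivity.
  - cbn [map fold_right]. rewrite H, IH. reflexivity.
Qed.

Definition G t (phi : series) (n m : Z) := Cmult (lam t (- fexp n m)) (phi n m).

Lemma G_shift t phi (H : H0 t phi) a b n m n1 m1 n2 m2 :
  n1 = (n - b)%Z -> m1 = (m + a + b)%Z -> n2 = (n - a)%Z -> m2 = (m - b)%Z ->
  G t phi n1 m1 = G t phi n2 m2.
Proof.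
  intros -> E1 -> ->.
  replace m1 with (m - (- a - b))%Z by lia. clear E1.
  pose proof (f_equal (fun F => F n m) (H0_mono t phi H (RtoC 1, (a, b)))) as K.
  rewrite mono_l in K. cbv beta in K. unfold rmul_mono in K.
  unfold G.
  set (A := - IZR b ^ 2 / 2 - IZR a * IZR b) in *.
  set (B := IZR ((- a - b) * (n - b))) in *.
  set (C := IZR ((m - b) * a)) in *.
  pose proof (key_id a b n m) as KI. fold A B C in KI.
  set (f1 := fexp (n - b) (m - (- a - b))) in *.
  set (f2 := fexp (n - a) (m - b)) in *.
  transitivity (Cmult (lam t (- f1 - A - B)) (Cmult (Cmult (Cmult (RtoC 1) (lam t A)) (lam t B)) (phi (n - b)%Z (m - (- a - b))%Z))).
  { replace (lam t (- f1)) with (Cmult (Cmult (lam t (- f1 - A - B)) (lam t A)) (lam t B)).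
    ring. rewrite !lam_add. apply lam_eq. ring. }
  rewrite K.
  replace (lam t (- f2)) with (Cmult (lam t (- f1 - A - B)) (lam t C)).
  ring. rewrite lam_add. apply lam_eq. lra.
Qed.

Lemma shift_lemma (F : Z -> Z -> Complex.C) dx dy :
  (forall n m, F (n + dx)%Z (m + dy)%Z = F n m) ->
  forall k n m, F (n + k * dx)%Z (m + k * dy)%Z = F n m.
Proof.
  intros H k. induction k as [|k IH|k IH] using Z.peano_ind; intros n m.
  - rewrite !Z.mul_0_l, !Z.add_0_r. reflexivity.
  - replace (n + Z.succ k * dx)%Z with ((n + k * dx) + dx)%Z by ring.
    replace (m + Z.succ k * dy)%Z with ((m + k * dy) + dy)%Z by ring.
    rewrite H. apply IH.
  - rewrite <- (IH n m).
    replace (n + k * dx)%Z with ((n + Z.pred k * dx) + dx)%Z by (rewrite Z.mul_pred_l; ring).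
    replace (m + k * dy)%Z with ((m + Z.pred k * dy) + dy)%Z by (rewrite Z.mul_pred_l; ring).
    rewrite H. reflexivity.
Qed.

Lemma G_class t phi (H : H0 t phi) e n m j :
  ((m - e) - n = 3 * j)%Z -> G t phi n m = G t phi 0 e.
Proof.
  intro Hj.
  assert (V1 : forall n m, G t phi (n + 1)%Z (m + 1)%Z = G t phi n m).
  { intros x y. apply (G_shift t phi H 1 0 (x + 1) y); lia. }
  assert (V2 : forall n m, G t phi (n + -1)%Z (m + 2)%Z = G t phi n m).
  { intros x y. apply (G_shift t phi H 0 1 x (y + 1)); lia. }
  transitivity (G t phi ((0 + (n + j) * 1) + j * (-1))%Z ((e + (n + j) * 1) + j * 2)%Z).
  { f_equal; lia. }
  rewrite (shift_lemma _ _ _ V2), (shift_lemma _ _ _ V1). reflexivity.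
Qed.

Lemma phi_G t phi n m : phi n m = Cmult (lam t (fexp n m)) (G t phi n m).
Proof.
  unfold G. transitivity (Cmult (Cmult (lam t (fexp n m)) (lam t (- fexp n m))) (phi n m)).
  - rewrite lam_add, (lam_0 t); [ring|ring].
  - ring.
Qed.

Lemma G_0 t phi e : (e = 0 \/ e = 1 \/ e = -1)%Z -> G t phi 0 e = phi 0%Z e.
Proof.
  intros He. unfold G. rewrite (lam_0 t). ring.
  unfold fexp, rr. destruct He as [-> | [-> | ->]]; simpl; field.
Qed.

Lemma part1 (theta : R) : forall phi : series, H0 theta phi ->
     forall n m : Z,
       (Z.modulo (m - n) 3 = 0%Z ->
          phi n m = Cmult (lam theta ((IZR (m*m) + IZR (n*n) + 4 * IZR (m*n)) / 6)) (phi 0%Z 0%Z)) /\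
       (Z.modulo (m - n) 3 = 1%Z ->
          phi n m = Cmult (lam theta ((IZR (m*m) + IZR (n*n) + 4 * IZR (m*n) - 1) / 6)) (phi 0%Z 1%Z)) /\
       (Z.modulo (m - n) 3 = 2%Z ->
          phi n m = Cmult (lam theta ((IZR (m*m) + IZR (n*n) + 4 * IZR (m*n) - 1) / 6)) (phi 0%Z (-1)%Z)).
Proof.
  intros phi H n m.
  pose proof (Z.div_mod (m - n) 3 ltac:(lia)) as Hd.
  set (j := ((m - n) / 3)%Z) in *.
  split; [|split]; intro Hq; rewrite (phi_G theta phi n m).
  - rewrite (G_class theta phi H 0 n m j) by lia. rewrite G_0 by lia.
    f_equal. apply lam_eq. unfold fexp, rr. rewrite Hq. simpl. field.
  - rewrite (G_class theta phi H 1 n m j) by lia. rewrite G_0 by lia.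
    f_equal. apply lam_eq. unfold fexp, rr. rewrite Hq. simpl. field.
  - rewrite (G_class theta phi H (-1) n m (j + 1)) by lia. rewrite G_0 by lia.
    f_equal. apply lam_eq. unfold fexp, rr. rewrite Hq. simpl. field.
Qed.

Definition sel (c0 c1 c2 : Complex.C) (n m : Z) : Complex.C :=
  if Z.eqb (Z.modulo (m - n) 3) 0 then c0
  else if Z.eqb (Z.modulo (m - n) 3) 1 then c1 else c2.

Definition phi0 t c0 c1 c2 : series := fun n m => Cmult (lam t (fexp n m)) (sel c0 c1 c2 n m).

Lemma phi0_H0 t c0 c1 c2 : H0 t (phi0 t c0 c1 c2).
Proof.
  apply mono_H0. intros [c [a b]]. rewrite mono_l.
  apply functional_extensionality; intro n. apply functional_extensionality; intro m.
  unfold rmul_mono, phi0.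
  replace (sel c0 c1 c2 (n - b) (m - (- a - b))) with (sel c0 c1 c2 (n - a) (m - b))
    by (unfold sel; rewrite cls_shift; reflexivity).
  set (S := sel c0 c1 c2 (n - a) (m - b)).
  pose proof (key_id a b n m) as KI.
  transitivity (Cmult c (Cmult (lam t ((- IZR b ^ 2 / 2 - IZR a * IZR b) + IZR ((- a - b) * (n - b)) + fexp (n - b) (m - (- a - b)))) S)).
  { rewrite <- !lam_add. ring. }
  rewrite KI. rewrite <- lam_add. ring.
Qed.

Theorem mainTheorem3 (theta : R) (Htheta : irrational theta) :
  (* coefficient formulas for every phi in H^0 *)
  (forall phi : series, H0 theta phi ->
     forall n m : Z,
       (Z.modulo (m - n) 3 = 0%Z ->
          phi n m = Cmult (lam theta ((IZR (m*m) + IZR (n*n) + 4 * IZR (m*n)) / 6)) (phi 0%Z 0%Z)) /\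
       (Z.modulo (m - n) 3 = 1%Z ->
          phi n m = Cmult (lam theta ((IZR (m*m) + IZR (n*n) + 4 * IZR (m*n) - 1) / 6)) (phi 0%Z 1%Z)) /\
       (Z.modulo (m - n) 3 = 2%Z ->
          phi n m = Cmult (lam theta ((IZR (m*m) + IZR (n*n) + 4 * IZR (m*n) - 1) / 6)) (phi 0%Z (-1)%Z)))
  /\
  (* phi is determined by phi_{0,0}, phi_{0,1}, phi_{0,-1} *)
  (forall phi psi : series, H0 theta phi -> H0 theta psi ->
     phi 0%Z 0%Z = psi 0%Z 0%Z -> phi 0%Z 1%Z = psi 0%Z 1%Z ->
     phi 0%Z (-1)%Z = psi 0%Z (-1)%Z -> phi = psi)
  /\
  (* these three coefficients are free: they generate the (3-dim) space *)
  (forall c0 c1 c2 : Coquelicot.Complex.C, exists phi : series, H0 theta phi /\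
     phi 0%Z 0%Z = c0 /\ phi 0%Z 1%Z = c1 /\ phi 0%Z (-1)%Z = c2).
Proof.
  split; [apply part1|split].
  - intros phi psi Hp Hs E0 E1 E2.
    apply functional_extensionality; intro n. apply functional_extensionality; intro m.
    destruct (part1 theta phi Hp n m) as [A1 [A2 A3]].
    destruct (part1 theta psi Hs n m) as [B1 [B2 B3]].
    pose proof (Z.mod_pos_bound (m - n) 3 ltac:(lia)) as Hb.
    assert (Z.modulo (m - n) 3 = 0 \/ Z.modulo (m - n) 3 = 1 \/ Z.modulo (m - n) 3 = 2)%Z
      as [Hq|[Hq|Hq]] by lia.
    + rewrite A1, B1, E0 by exact Hq. reflexivity.
    + rewrite A2, B2, E1 by exact Hq. reflexivity.
    + rewrite A3, B3, E2 by exact Hq. reflexivity.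
  - intros c0 c1 c2. exists (phi0 theta c0 c1 c2). split; [apply phi0_H0|].
    unfold phi0, sel, fexp, rr. simpl.
    split; [|split]; rewrite (lam_0 theta); try ring; field.
Qed.
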